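(* Let $m\ge2$ and $f_1,\dots,f_m:X\to\mathbb R_{+\infty}$ with $\bigcap_{i=1}^m\operatorname{dom} f_i\ne\emptyset$. Assume $$\operatorname{cl}\Big(\sum_{i=1}^m\operatorname{epi} f_i^*\Big)=\operatorname{epi}\Big(\sum_{i=1}^mf_i\Big)^*,$$ where the closure is taken in $\mathcal L\times\mathbb R$. Then for all $x\in\bigcap_{i=1}^m\operatorname{dom} f_i$ and all $\varepsilon\ge0$, $$\partial_\varepsilon\Big(\sum_{i=1}^m f_i\Big)(x)=\bigcap_{\eta>0}\operatorname{cl}\Big(\bigcup_{\substack{\varepsilon_i\ge0,\ \sum_{i=1}^m\varepsilon_i=\varepsilon+\eta}}\ \sum_{i=1}^m\partial_{\varepsilon_i}f_i(x)\Big).$$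
   Context: $X$ is a nonempty set; $\mathbb R_{+\infty}=\mathbb R\cup\{+\infty\}$. $\mathcal L$ is a family of functions $X\to\mathbb R$ closed under pointwise addition and real scalar multiplication, equipped with the pointwise convergence topology (weakest topology making all evaluations $l\mapsto l(x)$ continuous); $\mathcal L\times\mathbb R$ carries the product topology; $\operatorname{cl}$ denotes closure. For $f:X\to\mathbb R_{+\infty}$: $\operatorname{dom} f=\{x:f(x)<+\infty\}$; $f^*(l)=\sup_{x\in X}(l(x)-f(x))$; $\operatorname{epi} f^*=\{(l,r)\in\mathcal L\times\mathbb R:f^*(l)\le r\}$; for $\varepsilon\ge0$, $x\in\operatorname{dom} f$, $\partial_\varepsilon f(x)=\{l\in\mathcal L: f(y)-f(x)-(l(y)-l(x))+\varepsilon\ge0\ \forall y\in X\}$. Sums of subsets (of $\mathcal L$ or of $\mathcal L\times\mathbb R$) are Minkowski sums. *)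

(* Defs.v *)
From Stdlib Require Import Reals List.
Open Scope R_scope.

Inductive ERp : Type := Fin (r : R) | PInf.

Definition eadd (a b : ERp) : ERp :=
  match a, b with Fin x, Fin y => Fin (x + y) | _, _ => PInf end.

Fixpoint rsum (n : nat) (g : nat -> R) : R :=
  match n with O => 0 | S k => rsum k g + g k end.
Fixpoint esum (n : nat) (g : nat -> ERp) : ERp :=
  match n with O => Fin 0 | S k => eadd (esum k g) (g k) end.

Definition fsum {X : Type} (m : nat) (f : nat -> X -> ERp) : X -> ERp :=
  fun x => esum m (fun i => f i x).

Definition indom {X : Type} (f : X -> ERp) (x : X) : Prop := exists r, f x = Fin r.

Definition is_linear_family {X : Type} (L : (X -> R) -> Prop) : Prop :=
  (forall l1 l2, L l1 -> L l2 -> L (fun x => l1 x + l2 x)) /\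
  (forall (a : R) l, L l -> L (fun x => a * l x)).

(* epi f^* = {(l,r) in L x R : f^*(l) <= r}, with f^*(l) = sup_x (l x - f x);
   sup <= r unfolds to: l x - f x <= r for all x (trivial where f x = +oo). *)
Definition epi_conj {X : Type} (L : (X -> R) -> Prop) (f : X -> ERp)
  (p : (X -> R) * R) : Prop :=
  L (fst p) /\
  forall x, match f x with Fin fx => fst p x - fx <= snd p | PInf => True end.

Definition esubdiff {X : Type} (L : (X -> R) -> Prop) (f : X -> ERp) (eps : R)
  (x : X) (l : X -> R) : Prop :=
  L l /\ exists fx, f x = Fin fx /\
  forall y, match f y with
            | Fin fy => fy - fx - (l y - l x) + eps >= 0
            | PInf => True end.

Definition msum_pair {X : Type} (m : nat) (A : nat -> (X -> R) * R -> Prop)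
  (p : (X -> R) * R) : Prop :=
  exists g : nat -> (X -> R) * R,
    (forall i, (i < m)%nat -> A i (g i)) /\
    (forall x, fst p x = rsum m (fun i => fst (g i) x)) /\
    snd p = rsum m (fun i => snd (g i)).

Definition msum {X : Type} (m : nat) (A : nat -> (X -> R) -> Prop)
  (l : X -> R) : Prop :=
  exists g : nat -> X -> R,
    (forall i, (i < m)%nat -> A i (g i)) /\
    (forall x, l x = rsum m (fun i => g i x)).

(* Closure in L (pointwise convergence topology): basic neighbourhoods of l
   are {l' in L : |l' x - l x| < d for x in a finite list xs}. *)
Definition clL {X : Type} (L : (X -> R) -> Prop) (S : (X -> R) -> Prop)
  (l : X -> R) : Prop :=
  L l /\ forall (xs : list X) (d : R), d > 0 ->
    exists l', S l' /\ Forall (fun x => Rabs (l' x - l x) < d) xs.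

(* Closure in L x R (product topology) *)
Definition clLR {X : Type} (L : (X -> R) -> Prop) (S : (X -> R) * R -> Prop)
  (p : (X -> R) * R) : Prop :=
  L (fst p) /\ forall (xs : list X) (d : R), d > 0 ->
    exists q, S q /\ Forall (fun x => Rabs (fst q x - fst p x) < d) xs
              /\ Rabs (snd q - snd p) < d.

(* Main.v *)
Require Import Defs.
From Stdlib Require Import Reals List Lra Lia.
Open Scope R_scope.

Definition val (a : ERp) : R := match a with Fin r => r | PInf => 0 end.

Lemma esum_fin n h s : esum n h = Fin s ->
  (forall i, (i < n)%nat -> h i = Fin (val (h i))) /\ s = rsum n (fun i => val (h i)).
Proof.
  revert s; induction n as [|n IH]; intros s Hs; simpl in *.
  - inversion Hs; split; [intros; lia | reflexivity].
  - destruct (esum n h) as [a|] eqn:Ha; destruct (h n) as [b|] eqn:Hb; simpl in Hs;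
      try discriminate.
    inversion Hs; subst. destruct (IH a eq_refl) as [H1 H2]. split.
    + intros i Hi. destruct (Nat.eq_dec i n) as [Heq|Hne]. subst i. rewrite Hb; reflexivity.
      apply H1; lia.
    + rewrite H2; reflexivity.
Qed.

Lemma esum_fin2 n h : (forall i, (i < n)%nat -> exists r, h i = Fin r) ->
  esum n h = Fin (rsum n (fun i => val (h i))).
Proof.
  induction n as [|n IH]; intros H; simpl; auto.
  rewrite IH by (intros; apply H; lia).
  destruct (H n ltac:(lia)) as [r Hr]; rewrite Hr; reflexivity.
Qed.

Lemma rsum_ext n g h : (forall i, (i < n)%nat -> g i = h i) -> rsum n g = rsum n h.
Proof. induction n; intros H; simpl; auto. rewrite IHn by (intros; apply H; lia). rewrite H by lia; auto. Qed.

Lemma rsum_plus n g h : rsum n (fun i => g i + h i) = rsum n g + rsum n h.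
Proof. induction n; simpl; [lra|]. rewrite IHn; lra. Qed.

Lemma rsum_minus n g h : rsum n (fun i => g i - h i) = rsum n g - rsum n h.
Proof. induction n; simpl; [lra|]. rewrite IHn; lra. Qed.

Lemma rsum_nonneg n g : (forall i, (i < n)%nat -> 0 <= g i) -> 0 <= rsum n g.
Proof. induction n; intros H; simpl; [lra|]. specialize (IHn ltac:(intros; apply H; lia)).
  specialize (H n ltac:(lia)); lra. Qed.

Lemma rsum_upd0 n g c : (1 <= n)%nat ->
  rsum n (fun i => if Nat.eqb i 0 then g i + c else g i) = rsum n g + c.
Proof.
  induction n as [|n IH]; intros Hn; [lia|]. simpl.
  destruct n as [|n']. simpl. lra.
  rewrite IH by lia. replace (Nat.eqb (S n') 0) with false by reflexivity. lra.
Qed.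

Theorem mainTheorem10 (X : Type) (x0 : X) (L : (X -> R) -> Prop)
  (HL : is_linear_family L) (m : nat) (Hm : (2 <= m)%nat)
  (f : nat -> X -> ERp)
  (Hdom : exists x, forall i, (i < m)%nat -> indom (f i) x)
  (Hcl : forall p, clLR L (msum_pair m (fun i => epi_conj L (f i))) p
                   <-> epi_conj L (fsum m f) p) :
  forall (x : X) (eps : R),
    (forall i, (i < m)%nat -> indom (f i) x) -> 0 <= eps ->
    forall l : X -> R,
      esubdiff L (fsum m f) eps x l <->
      (forall eta : R, eta > 0 ->
         clL L (fun l' => exists e : nat -> R,
                   (forall i, (i < m)%nat -> 0 <= e i) /\
                   rsum m e = eps + eta /\
                   msum m (fun i => esubdiff L (f i) (e i) x) l') l).
Proof.
  intros x eps Hx Heps l.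
  assert (HFx : fsum m f x = Fin (rsum m (fun i => val (f i x)))).
  { unfold fsum. apply esum_fin2. intros i Hi. exact (Hx i Hi). }
  assert (Hfix : forall i, (i < m)%nat -> f i x = Fin (val (f i x))).
  { intros i Hi. destruct (Hx i Hi) as [r Hr]. rewrite Hr. reflexivity. }
  split.
  - intros [HLl [Fx [HFx' Hsub]]].
    rewrite HFx in HFx'. inversion HFx'. subst Fx. clear HFx'.
    set (Fx := rsum m (fun i => val (f i x))) in *.
    assert (Hepi : epi_conj L (fsum m f) (l, l x - Fx + eps)).
    { split; [exact HLl|]. intros y. simpl. specialize (Hsub y).
      destruct (fsum m f y); [lra|trivial]. }
    apply Hcl in Hepi. destruct Hepi as [_ Hc].
    intros eta Heta. split; [exact HLl|]. intros xs d0 Hd0.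
    assert (Hdp : Rmin d0 (eta/2) > 0) by (apply Rmin_pos; lra).
    destruct (Hc (x :: xs) _ Hdp) as [q [[g [Hg [Hq1 Hq2]]] [Hfa Hsnd]]].
    inversion Hfa as [|? ? Hqx Hrest]; subst. simpl in Hqx, Hsnd.
    pose proof (Rmin_l d0 (eta/2)). pose proof (Rmin_r d0 (eta/2)).
    exists (fst q). split.
    + set (e' := fun i => snd (g i) - fst (g i) x + val (f i x)).
      set (c := eps + eta - rsum m e').
      assert (He' : forall i, (i < m)%nat -> 0 <= e' i).
      { intros i Hi. destruct (Hg i Hi) as [_ Hgi]. specialize (Hgi x).
        rewrite (Hfix i Hi) in Hgi. unfold e'. lra. }
      assert (Hse : rsum m e' = snd q - fst q x + Fx).
      { unfold e'. rewrite rsum_plus, rsum_minus, Hq2, Hq1. reflexivity. }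
      assert (Hc0 : 0 <= c).
      { unfold c. rewrite Hse.
        apply Rabs_def2 in Hqx. apply Rabs_def2 in Hsnd. lra. }
      exists (fun i => if Nat.eqb i 0 then e' i + c else e' i).
      split; [|split].
      * intros i Hi. specialize (He' i Hi). destruct (Nat.eqb i 0); lra.
      * rewrite rsum_upd0 by lia. unfold c. lra.
      * exists (fun i => fst (g i)). split; [|exact Hq1].
        intros i Hi. destruct (Hg i Hi) as [HLg Hgi]. split; [exact HLg|].
        exists (val (f i x)). split; [exact (Hfix i Hi)|].
        intros y. specialize (Hgi y). destruct (f i y); [|trivial].
        destruct (Nat.eqb i 0); unfold e'; lra.
    + eapply Forall_impl; [|exact Hrest]. intros z Hz. simpl in Hz. lra.
  - intros H. destruct (H 1 ltac:(lra)) as [HLl _].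
    split; [exact HLl|]. exists (rsum m (fun i => val (f i x))). split; [exact HFx|].
    intros y. destruct (fsum m f y) as [r|] eqn:Hy; [|trivial].
    destruct (esum_fin _ _ _ Hy) as [Hfy Hr].
    set (Fx := rsum m (fun i => val (f i x))).
    destruct (Rlt_or_le (r - Fx - (l y - l x) + eps) 0) as [Hneg|]; [|lra].
    exfalso.
    set (K := r - Fx - (l y - l x) + eps) in *.
    destruct (H (-K/2) ltac:(lra)) as [_ Hc].
    destruct (Hc (x :: y :: nil) (-K/8) ltac:(lra)) as
      [l' [[e [He [Hse [g [Hg Hl']]]]] Hfa]].
    inversion Hfa as [|? ? Hax Hr1]; subst. inversion Hr1 as [|? ? Hay _]; subst.
    apply Rabs_def2 in Hax. apply Rabs_def2 in Hay.
    set (t := fun i => val (f i y) - val (f i x) - (g i y - g i x) + e i).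
    assert (Ht : 0 <= rsum m t).
    { apply rsum_nonneg. intros i Hi. destruct (Hg i Hi) as [_ [fxi [Hfxi Hgi]]].
      specialize (Hgi y). rewrite (Hfix i Hi) in Hfxi. inversion Hfxi; subst fxi.
      rewrite (Hfy i Hi) in Hgi. unfold t. lra. }
    unfold t in Ht. rewrite !rsum_plus, !rsum_minus, Hse in Ht.
    rewrite <- (Hl' y), <- (Hl' x) in Ht. fold Fx in Ht.
    unfold K in *. lra.
Qed.
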